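(* Fix $q\in(0,1)$. Consider a sequence of problems indexed by $n\to\infty$ with dimension $p=p_n$ (possibly diverging with $n$). For each $n$, let $\widehat{W}_1,\ldots,\widehat{W}_p$ be real-valued random variables (the approximate knockoff statistics) and let $\mathcal{H}_0\subset\{1,\ldots,p\}$ be the (deterministic) set of null features. Define the threshold $$T_q \equiv \min\Big\{ t\in\{|\widehat W_1|,\ldots,|\widehat W_p|\} : \frac{\#\{j:\widehat W_j\le -t\}}{\#\{j:\widehat W_j\ge t\}\vee 1}\le q\Big\},$$ the selected set $\widehat{\mathcal S}\equiv\{j\in[p]:\widehat W_j\ge T_q\}$, and $$\mathrm{FDR}\equiv \mathbb E\Big[\frac{\#\{j: j\in\widehat{\mathcal S}\cap\mathcal H_0\}}{\#\{j:j\in\widehat{\mathcal S}\}\vee 1}\Big].$$ Assume that for some $\alpha_n>0$ the following hold: (1) (asymptotic approximate symmetry) $\displaystyle\sup_{t\in(0,\alpha_n)}\Big|\frac{\sum_{j\in\mathcal H_0}\mathbb P(\widehat W_j\ge t)}{\sum_{j\in\mathcal H_0}\mathbb P(\widehat W_j\le -t)}-1\Big| = o(1)$; (2) (approximation for indicator functions) $$\sup_{t\in(0,\alpha_n)}\Big\{\Big|\frac{\sum_{j\in\mathcal H_0}\mathbf 1\{\widehat W_j\ge t\}}{\sum_{j\in\mathcal H_0}\mathbb P(\widehat W_j\ge t)}-1\Big|\vee\Big|\frac{\sum_{j\in\mathcal H_0}\mathbf 1\{\widehat W_j\le -t\}}{\sum_{j\in\mathcal H_0}\mathbb P(\widehat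 W_j\le -t)}-1\Big|\Big\}=o_{\mathbb P}(1);$$ (3) (localization of $T_q$) $\mathbb P(T_q>\alpha_n)=o(1)$. Then $\limsup_{n\to\infty}\mathrm{FDR}\le q$.
   Context: All asymptotic statements are as $n\to\infty$ with $p$ allowed to diverge with $n$; $a_n=o(b_n)$ means $a_n/b_n\to0$ and $a_n=o_{\mathbb P}(b_n)$ means $a_n/b_n\to0$ in probability. $a\vee b=\max\{a,b\}$. *)

(* Defs.v *)
From HB Require Import structures.
From mathcomp Require Import all_boot all_order all_algebra.
From mathcomp Require Import all_classical all_reals all_analysis.
Set Implicit Arguments. Unset Strict Implicit. Unset Printing Implicit Defensive.
Import Order.TTheory GRing.Theory Num.Theory.
Local Open Scope ring_scope.

Definition count_neg {R : realType} {m : nat} (w : 'I_m -> R) (t : R) : nat :=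
  #|[set j | w j <= - t]|.
Definition count_pos {R : realType} {m : nat} (w : 'I_m -> R) (t : R) : nat :=
  #|[set j | t <= w j]|.

Definition ratio_ok {R : realType} {m : nat} (q : R) (w : 'I_m -> R) (t : R) : bool :=
  (count_neg w t)%:R / (maxn (count_pos w t) 1)%:R <= q.

(* T_q = min { t in {|W_1|,...,|W_p|} : ratio condition }, with min of the
   empty set = +oo (so that nothing is selected). *)
Definition kthreshold {R : realType} {m : nat} (q : R) (w : 'I_m -> R) : \bar R :=
  \big[Order.min/+oo%E]_(j | ratio_ok q w `|w j|) (`|w j|)%:E.

Definition kselected {R : realType} {m : nat} (q : R) (w : 'I_m -> R) : {set 'I_m} :=
  [set j | (kthreshold q w <= (w j)%:E)%E].

Definition FDP {R : realType} {m : nat} (q : R) (H0 : {set 'I_m}) (w : 'I_m -> R) : R :=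
  #|kselected q w :&: H0|%:R / (maxn #|kselected q w| 1)%:R.

Definition prob {d : measure_display} {T : measurableType d} {R : realType}
  (P : probability T R) (A : set T) : R := fine (P A).

(* Main.v *)
Require Import Defs.
From HB Require Import structures.
From mathcomp Require Import all_boot all_order all_algebra.
From mathcomp Require Import all_classical all_reals all_analysis.
From mathcomp Require Import ring lra.
From mathcomp Require Import measurable_realfun.
Import Order.TTheory GRing.Theory Num.Theory.
Local Open Scope classical_set_scope.
Local Open Scope ring_scope.
Lemma atoms_meas d (T : measurableType d) (I : finType) (b : I -> T -> bool)
  (X : Type) (G : {ffun I -> bool} -> X) (Y : set X) :
  (forall i, measurable [set w | b i w]) ->
  measurable [set w | Y (G [ffun i => b i w])].
Proof.
move=> mb.
have -> : [set w | Y (G [ffun i => b i w])] =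
  \bigcup_(v in [set v | Y (G v)]) \bigcap_(i in [set: I]) [set w | b i w = v i].
  rewrite predeqE => w; split.
    by move=> Yw; exists [ffun i => b i w] => // i _; rewrite ffunE.
  case=> v Yv H /=.
  suff -> : [ffun i => b i w] = v by [].
  by apply/ffunP => i; rewrite ffunE; apply: H.
apply: fin_bigcup_measurable; first exact: finite_finset.
move=> v _; apply: fin_bigcap_measurable; first exact: finite_finset.
move=> i _; case: (v i).
  by rewrite (_ : [set w | b i w = true] = [set w | b i w]).
have -> : [set w | b i w = false] = ~` [set w | b i w].
  by rewrite predeqE => w /=; split; [move=> ->|move/negP/negbTE].
exact: measurableC.
Qed.
Section K.
Variables (R : realType) (m : nat) (q : R) (w : 'I_m -> R).
Local Open Scope ereal_scope.

Lemma kth_cases : kthreshold q w = +oo \/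
  exists k, ratio_ok q w `|w k| /\ kthreshold q w = (`|w k|)%:E.
Proof.
rewrite /kthreshold; elim/big_ind: _ => [|x y Hx Hy|k Hk]; first by left.
- by rewrite minEle; case: ifP.
- by right; exists k.
Qed.

Lemma kth_le k : ratio_ok q w `|w k| -> kthreshold q w <= (`|w k|)%:E.
Proof. by move=> Hk; rewrite /kthreshold (bigD1 k) //= ge_min lexx. Qed.

Lemma kth_gtE (a : R) : (a%:E < kthreshold q w) =
  [forall k, ratio_ok q w `|w k| ==> (a < `|w k|)%R].
Proof.
apply/idP/forallP.
  move=> H k; apply/implyP => Hk; rewrite -lte_fin.
  exact: (lt_le_trans H (@kth_le k Hk)).
move=> H; case: kth_cases => [->|[k [Hk ->]]]; first exact: ltry.
by rewrite lte_fin; exact: (implyP (H k)).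
Qed.

Lemma kth_leE (a : R) : (kthreshold q w <= a%:E) =
  [exists k, ratio_ok q w `|w k| && (`|w k| <= a)%R].
Proof.
apply/idP/existsP.
  case: kth_cases => [->|[k [Hk ->]]]; first by rewrite leye_eq.
  by rewrite lee_fin => H; exists k; rewrite Hk H.
case=> k /andP[Hk Ha]; apply: le_trans (@kth_le k Hk) _; by rewrite lee_fin.
Qed.

End K.
Lemma gap (R : realType) m (x : 'I_m -> R) a b : a < b ->
  exists t, [/\ a < t, t < b & forall j, x j <= a \/ t < x j].
Proof.
move=> ab.
pose M := \big[Order.min/b]_(j | a < x j) x j.
have aM : a < M by rewrite /M; elim/big_ind: _ => // y z; rewrite lt_min => -> ->.
have Mx j : a < x j -> M <= x j by move=> H; rewrite /M (bigD1 j) //= ge_min lexx.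
pose M' := Order.min M b.
have aM' : a < M' by rewrite lt_min aM ab.
have M'b : M' <= b by rewrite ge_min lexx orbT.
have M'M : M' <= M by rewrite ge_min lexx.
exists ((a + M') / 2); split; [lra|lra|].
move=> j; case: (leP (x j) a) => H; [by left|right].
have := Mx j H; lra.
Qed.

Lemma ratio_bounds (R : realType) (a b e : R) : 0 <= b -> e < 1 ->
  `|a / b - 1| <= e -> [/\ 0 < b, a <= (1 + e) * b & (1 - e) * b <= a].
Proof.
move=> b0 e1 H.
have bn0 : b != 0.
  apply/negP => /eqP bz; move: H; rewrite bz invr0 mulr0 sub0r normrN normr1.
  lra.
have bp : 0 < b by rewrite lt_neqAle eq_sym bn0 b0.
have ae : a = (a / b) * b by rewrite divfK.
move: ae H; rewrite ler_norml; move: (a / b) => r ae /andP[H1 H2].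
rewrite ae; split => //; nra.
Qed.
Local Close Scope classical_set_scope.
Lemma det_bound (R : realType) m (q : R) (H0 : {set 'I_m}) (w : 'I_m -> R)
  (alpha eps : R) (Ep En : R -> R) :
  0 <= q <= 1 -> 0 < eps <= 1/2 -> 0 < alpha ->
  (forall t, 0 < t < alpha -> `|Ep t / En t - 1| <= eps) ->
  (forall t, 0 < t < alpha -> Num.max
     `|(#|[set j in H0 | t <= w j]|)%:R / Ep t - 1|
     `|(#|[set j in H0 | w j <= - t]|)%:R / En t - 1| <= eps) ->
  (forall t, 0 <= Ep t) -> (forall t, 0 <= En t) ->
  ~~ ((alpha%:E < kthreshold q w)%E) ->
  FDP q H0 w <= q + 8 * eps.
Proof.
move=> /andP[q0 q1] /andP[e0 e2] a0 h1 h2 Ep0 En0 hT.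
have key t : 0 < t < alpha ->
  (#|[set j in H0 | t <= w j]|)%:R <= (1 + 8 * eps) * (#|[set j in H0 | w j <= - t]|)%:R.
  move=> ht; have := h2 t ht; rewrite ge_max => /andP[hp hn].
  have e1 : eps < 1 by lra.
  have [Ep_p hp1 _] := @ratio_bounds R _ _ _ (Ep0 t) e1 hp.
  have [En_p _ hn2] := @ratio_bounds R _ _ _ (En0 t) e1 hn.
  have [_ he1 _] := @ratio_bounds R _ _ _ (En0 t) e1 (h1 t ht).
  move: hp1 hn2 he1; set Np := _%:R; set Nn := _%:R; move: (Ep t) (En t) Ep_p En_p => x y xp yp.
  move=> H1 H2 H3.
  have S1 : Np <= (1 + eps) * ((1 + eps) * y).
    apply: (le_trans H1); apply: ler_wpM2l => //; lra.
  have S2 : (1 + 8 * eps) * ((1 - eps) * y) <= (1 + 8 * eps) * Nn.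
    apply: ler_wpM2l => //; lra.
  have S3 : (1 + eps) * ((1 + eps) * y) <= (1 + 8 * eps) * ((1 - eps) * y).
    have : 0 <= eps * (5 - 9 * eps) * y.
      apply: mulr_ge0; [apply: mulr_ge0; lra|lra].
    lra.
  lra.
case: (@kth_cases R m q w) => [Hinf|[k [Hk HT]]].
  by move: hT; rewrite Hinf ltry.
move: hT; rewrite HT lte_fin -leNgt => t0a.
move: Hk HT t0a (normr_ge0 (w k)); move: (`|w k| : R) => t0 Hk HT t0a t00.
have selE : kselected q w = [set j | t0 <= w j].
  by apply/setP => j; rewrite !inE HT lee_fin.
have [t [t0' ta P1 P2]] : exists t, [/\ 0 < t, t < alpha,
    forall j, t0 <= w j -> w j < t -> w j <= - t0 &
    forall j, w j <= - t -> w j <= - t0].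
  have [->|t0p] := eqVneq t0 0.
    have [t [t0' ta H]] := @gap R m w 0 alpha a0.
    exists t; split => // j; rewrite oppr0.
      by move=> _ wt; case: (H j) => // /lt_le_trans /(_ (ltW wt)); rewrite ltxx.
    move=> wt; lra.
  have t0p' : 0 < t0 by rewrite lt_neqAle eq_sym t0p t00.
  have ht0 : - t0 < 0 by lra.
  have [t' [t1 t2 H]] := @gap R m w (- t0) 0 ht0.
  exists (- t'); split; [lra|lra| |].
    move=> j H3 H4; lra.
  move=> j H3; case: (H j) => // H4; lra.
set A := [set j | t0 <= w j] :&: H0.
set Pt := [set j in H0 | t <= w j].
set Nt := [set j in H0 | w j <= - t].
set Zs := [set j in H0 | (t0 <= w j) && (w j < t)].
set Bn := [set j | w j <= - t0].
have cA : (#|A| <= #|Pt| + #|Zs|)%N.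
  have U : (#|Pt :|: Zs| <= #|Pt| + #|Zs|)%N by rewrite -(cardsUI Pt Zs) leq_addr.
  apply: leq_trans U; apply: subset_leq_card.
  apply/fintype.subsetP => j; rewrite !inE => /andP[Hj Hh]; rewrite Hh /=.
  by rewrite Hj /=; case: (leP t (w j)).
have cB : (#|Nt| + #|Zs| <= #|Bn|)%N.
  have I0 : Nt :&: Zs = finset.set0.
    apply/setP => j; rewrite !inE; apply/negP => /andP[/andP[_ H3] /andP[_ /andP[H4 _]]].
    lra.
  rewrite -cardsUI I0 cards0 addn0; apply: subset_leq_card; apply/fintype.subsetP => j.
  rewrite !inE => /orP[/andP[_ H]|/andP[_ /andP[H H']]]; [exact: P2|exact: P1].
have kt := key t (_ : 0 < t < alpha); rewrite t0' ta in kt; have {}kt := kt erefl.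
have cneg : (#|A|)%:R <= (1 + 8 * eps) * (count_neg w t0)%:R.
  have ecount : count_neg w t0 = #|Bn| by [].
  rewrite ecount.
  move: cA cB; rewrite -!(ler_nat R) !natrD => cA cB.
  move: kt; rewrite -/Pt -/Nt => kt.
  have Zp : 0 <= (#|Zs|)%:R :> R by [].
  nra.
rewrite /FDP selE -/A.
move: Hk; rewrite /ratio_ok -/t0.
have mp : 0 < (maxn (count_pos w t0) 1)%:R :> R.
  by rewrite ltr0n leq_max orbT.
rewrite ler_pdivrMr // => Hr.
change (maxn #|[set j | t0 <= w j]| 1) with (maxn (count_pos w t0) 1).
rewrite ler_pdivrMr //.
have N0 : 0 <= (count_neg w t0)%:R :> R by [].
move: Hr cneg mp N0.
move: (count_neg w t0)%:R (#|A|)%:R (maxn _ 1)%:R => N a M H1 H2 H3 H4.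
have S1 : (1 + 8 * eps) * N <= (1 + 8 * eps) * (q * M).
  apply: ler_wpM2l => //; lra.
have S2 : (1 + 8 * eps) * (q * M) <= (q + 8 * eps) * M.
  have : 0 <= eps * (1 - q) * M by apply: mulr_ge0; [apply: mulr_ge0; lra|lra].
  lra.
lra.
Qed.
Local Open Scope classical_set_scope.
Section Meas.
Variables (d : measure_display) (T : measurableType d) (R : realType) (m : nat).
Variables (q alpha : R) (H0 : {set 'I_m}) (W : 'I_m -> T -> R).
Hypothesis mW : forall j, measurable_fun setT (W j).

Definition atomI := ((('I_m * 'I_m) + ('I_m * 'I_m)) + 'I_m)%type.

Definition atomb (i : atomI) (w : T) : bool :=
  match i with
  | inl (inl (j, k)) => W j w <= - `|W k w|
  | inl (inr (j, k)) => `|W k w| <= W j w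
  | inr k => alpha < `|W k w|
  end.

Let mabs k : measurable_fun setT (fun w => `|W k w|).
Proof. exact: (measurableT_comp (@measurable_realfun.normr_measurable R setT) (mW k)). Qed.

Lemma atomb_meas i : measurable [set w | atomb i w].
Proof.
case: i => [[[j k]|[j k]]|k] /=.
- rewrite -[X in measurable X]setTI.
  apply: (measurable_fun_le measurableT (mW j)).
  exact: measurable_realfun.measurable_funN (mabs k).
- rewrite -[X in measurable X]setTI.
  exact: (measurable_fun_le measurableT (mabs k) (mW j)).
- have -> : [set w | alpha < `|W k w|] = ~` (setT `&` [set w | `|W k w| <= alpha]).
    by rewrite setTI predeqE => w /=; rewrite ltNge; split => [/negP|/negP].
  apply: measurableC; apply: (measurable_fun_le measurableT (mabs k)).
  exact: measurable_cst.
Qed.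

Definition Gok (v : {ffun atomI -> bool}) (k : 'I_m) : bool :=
  (#|[set j | v (inl (inl (j, k)))]%SET|)%:R / (maxn #|[set j | v (inl (inr (j, k)))]%SET| 1)%:R <= q.

Lemma GokE w k : Gok [ffun i => atomb i w] k = ratio_ok q (fun j => W j w) `|W k w|.
Proof.
rewrite /Gok /ratio_ok /count_neg /count_pos.
have E1 : #|[set j | [ffun i => atomb i w] (inl (inl (j, k)))]%SET| =
  #|[set j | W j w <= - `|W k w|]%SET| by apply: eq_card => j; rewrite !inE ffunE.
have E2 : #|[set j | [ffun i => atomb i w] (inl (inr (j, k)))]%SET| =
  #|[set j | `|W k w| <= W j w]%SET| by apply: eq_card => j; rewrite !inE ffunE.
by rewrite E1 E2.
Qed.

Definition GS (v : {ffun atomI -> bool}) : {set 'I_m} :=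
  [set j | [exists k, Gok v k && v (inl (inr (j, k)))]]%SET.

Lemma GSE w : GS [ffun i => atomb i w] = kselected q (fun j => W j w).
Proof.
apply/setP => j; rewrite !inE kth_leE.
apply/existsP/existsP => -[k Hk]; exists k; move: Hk; by rewrite GokE ffunE.
Qed.

Definition GF (v : {ffun atomI -> bool}) : R :=
  (#|GS v :&: H0|)%:R / (maxn #|GS v| 1)%:R.
Definition GB (v : {ffun atomI -> bool}) : bool := [forall k, Gok v k ==> v (inr k)].

Lemma FDP_meas : measurable_fun setT (fun w => FDP q H0 (fun j => W j w)).
Proof.
move=> _ Y _; rewrite setTI.
have -> : (fun w => FDP q H0 (fun j => W j w)) @^-1` Y =
  [set w | Y (GF [ffun i => atomb i w])].
  by rewrite predeqE => w /=; rewrite /GF GSE.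
exact: (@atoms_meas d T atomI atomb R GF Y atomb_meas).
Qed.

Lemma kthB_meas : measurable [set w | (alpha%:E < kthreshold q (fun j => W j w))%E].
Proof.
have -> : [set w | (alpha%:E < kthreshold q (fun j => W j w))%E] =
  [set w | (fun b : bool => is_true b) (GB [ffun i => atomb i w])].
  rewrite predeqE => w /=; rewrite kth_gtE.
  split => /forallP H; apply/forallP => k; move: (H k); by rewrite GokE ffunE.
exact: (@atoms_meas d T atomI atomb bool GB (fun b : bool => is_true b) atomb_meas).
Qed.

End Meas.
Lemma FDP_ge0 (R : realType) m (q : R) (H0 : {set 'I_m}) (w : 'I_m -> R) :
  0 <= FDP q H0 w.
Proof. by rewrite /FDP divr_ge0. Qed.

Lemma FDP_le1 (R : realType) m (q : R) (H0 : {set 'I_m}) (w : 'I_m -> R) :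
  FDP q H0 w <= 1.
Proof.
rewrite /FDP ler_pdivrMr ?ltr0n ?leq_max ?orbT // mul1r ler_nat.
exact: leq_trans (subset_leq_card (subsetIl _ _)) (leq_maxl _ _).
Qed.

Theorem theorem1 (R : realType) (q : R) (hq : 0 < q < 1)
  (d : nat -> measure_display) (T : forall n, measurableType (d n))
  (P : forall n, probability (T n) R)
  (p : nat -> nat)
  (W : forall n, 'I_(p n) -> T n -> R)
  (mW : forall n j, measurable_fun setT (W n j))
  (H0 : forall n, {set 'I_(p n)})
  (alpha : nat -> R) (halpha : forall n, 0 < alpha n)
  (* (1) asymptotic approximate symmetry *)
  (h1 : forall eps : R, 0 < eps -> \forall n \near \oo,
      forall t : R, 0 < t < alpha n ->
      `| (\sum_(j in H0 n) prob (P n) [set w | t <= W n j w])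
         / (\sum_(j in H0 n) prob (P n) [set w | W n j w <= - t]) - 1 | <= eps)
  (* (2) approximation for indicator functions, o_P(1) *)
  (h2 : forall eps delta : R, 0 < eps -> 0 < delta -> \forall n \near \oo,
      exists E : set (T n), [/\ measurable E, (P n E >= (1 - delta)%:E)%E &
        forall w, E w -> forall t : R, 0 < t < alpha n ->
        Num.max
          `| (#|[set j in H0 n | t <= W n j w]|)%:R
             / (\sum_(j in H0 n) prob (P n) [set w' | t <= W n j w']) - 1 |
          `| (#|[set j in H0 n | W n j w <= - t]|)%:R
             / (\sum_(j in H0 n) prob (P n) [set w' | W n j w' <= - t]) - 1 |
        <= eps])
  (* (3) localization of T_q *)
  (h3 : forall eps : R, 0 < eps -> \forall n \near \oo,
      (P n [set w | ((alpha n)%:E < kthreshold q (fun j => W n j w))%E] <= eps%:E)%E) :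
  (limn_esup (fun n => \int[P n]_w (FDP q (H0 n) (fun j => W n j w))%:E)
     <= q%:E)%E.
Proof.
move: (hq) => /andP[q0 q1].
apply/lee_addgt0Pr => eta eta0.
pose eps := Num.min (eta / 10) (1/2).
have e0 : 0 < eps by rewrite lt_min; apply/andP; split; lra.
have e2 : eps <= 1/2 by rewrite ge_min lexx orbT.
have e10 : eps <= eta / 10 by rewrite ge_min lexx.
pose del := eta / 10.
have qq : 0 <= q <= 1 by rewrite !ltW.
have ee : 0 < eps <= 1/2 by rewrite e0 e2.
have d0 : 0 < del by rewrite /del; lra.
set u := fun n => _.
have Hev : \forall n \near \oo, (u n <= (q + eta)%:E)%E.
  move: (h1 eps e0) (h2 eps del e0 d0) (h3 del d0); apply: filterS3.
  move=> n H1n [E [mE PE HE]] H3n.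
  set B := [set w | ((alpha n)%:E < kthreshold q (fun j => W n j w))%E] in H3n *.
  have mB : measurable B by apply: kthB_meas; exact: mW.
  set C := ~` E `|` B.
  have mC : measurable C by apply: measurableU => //; exact: measurableC.
  have Ep0 t : 0 <= \sum_(j in H0 n) prob (P n) [set w | t <= W n j w].
    by apply: sumr_ge0 => j _; apply: fine_ge0; exact: measure_ge0.
  have En0 t : 0 <= \sum_(j in H0 n) prob (P n) [set w | W n j w <= - t].
    by apply: sumr_ge0 => j _; apply: fine_ge0; exact: measure_ge0.
  have pw w : ((FDP q (H0 n) (fun j => W n j w))%:E <= ((q + 8 * eps) + \1_C w)%:E)%E.
    rewrite lee_fin indicE.
    case: (pselect (E w /\ ~ B w)) => [[Ew nB]|nG].
      have hb := @det_bound R (p n) q (H0 n) (fun j => W n j w) (alpha n) eps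
        (fun t => \sum_(j in H0 n) prob (P n) [set w | t <= W n j w])
        (fun t => \sum_(j in H0 n) prob (P n) [set w | W n j w <= - t])
        qq ee (halpha n) H1n (HE w Ew) Ep0 En0 (ltac:(apply/negP => H; apply: nB; exact: H)).
      move: hb.
      have : 0 <= (w \in C)%:R :> R by [].
      lra.
    have -> : w \in C.
      apply/mem_set; rewrite /C.
      case: (pselect (E w)) => Ew; [right|left] => //.
      by apply: contrapT => nB; apply: nG.
    have := @FDP_le1 R (p n) q (H0 n) (fun j => W n j w).
    rewrite (_ : true%:R = 1 :> R) //.
    lra.
  rewrite /u.
  have mF : measurable_fun setT (fun w => (FDP q (H0 n) (fun j => W n j w))%:E).
    apply/(measurable_realfun.measurable_EFinP setT (fun w => FDP q (H0 n) (fun j => W n j w))).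
    exact: FDP_meas.
  have mf2 : measurable_fun setT (fun w => ((q + 8 * eps) + \1_C w)%:E).
    apply/(measurable_realfun.measurable_EFinP setT (fun w => (q + 8 * eps) + \1_C w)).
    apply: measurable_funD; first exact: measurable_cst.
    exact: measurable_realfun.measurable_indic.
  have f10 : forall w, setT w -> (0 <= (FDP q (H0 n) (fun j => W n j w))%:E)%E.
    by move=> w _; rewrite lee_fin FDP_ge0.
  apply: le_trans (ge0_le_integral (P n) measurableT f10 mF mf2 (fun w _ => pw w)) _.
  under eq_integral do rewrite EFinD.
  rewrite ge0_integralD //; last first.
  - apply/(measurable_realfun.measurable_EFinP setT (\1_C)).
    exact: measurable_realfun.measurable_indic.
  - by move=> w _; rewrite lee_fin; lra.
  rewrite integral_cst //.
  have PT : P n [set: T n] = 1%E by exact: probability_setT.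
  rewrite [X in (_ * X)%E]PT.
  rewrite mule1 integral_indic // setIT.
  have PCb : (P n C <= (del + del)%:E)%E.
    apply: le_trans (measureU2 _ (measurableC mE) mB) _.
    have PCE : P n (~` E) = (1 - P n E)%E by exact: probability_setC.
    have -> : (P n (~` E) + P n B = 1 - P n E + P n B)%E by rewrite -PCE.
    rewrite EFinD; apply: leeD => //.
    move: PE (probability_le1 (P n) mE) (measure_ge0 (P n) E).
    case: (P n E) => [r||] //=; rewrite ?lee_fin => Hr1 Hr2 Hr3.
    lra.
  apply: le_trans (leeD (lexx _) PCb) _.
  rewrite -EFinD lee_fin /del; lra.
rewrite /limn_esup limf_esupE.
apply: (@le_trans _ _ (ereal_sup (u @` [set n | (u n <= (q + eta)%:E)%E]))).
  by apply: ereal_inf_lbound; exists [set n | (u n <= (q + eta)%:E)%E].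
apply: ge_ereal_sup => _ [n Hn <-].
by rewrite -EFinD.
Qed.
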